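(* Let $n\ge2$, $1\le r\le n-1$, $\alpha,\beta,\gamma\in\mathbb{Z}_2^{n-r}$ and $\alpha',\beta',\gamma'\in\mathbb{Z}_2^{r}$. Then $$\mathrm{adp}^{\mathrm{XR}}_r(\alpha'\|\alpha,\ \beta'\|\beta\to\gamma\|\gamma')=\sum_{a,b,c\in\mathbb{Z}_2}\mathrm{padp}_{a,b}(\alpha,\beta,\gamma^{[c]})\,\mathrm{cadp}_{c}(\alpha'^{[a]},\beta'^{[b]},\gamma').$$
   Context: For $x\in\mathbb{Z}_2^m$, $x=(x_0,\dots,x_{m-1})$ is identified with the integer $\sum_i x_i2^{m-1-i}$; arithmetic on $\mathbb{Z}_2^n$ is modulo $2^n$. $\oplus$ is bitwise XOR, $x\lll r=(x_r,\dots,x_{n-1},x_0,\dots,x_{r-1})$, $\overline{x}$ is the bitwise complement, $x^{[a]}=x$ if $a=0$ and $x^{[a]}=\overline{x}$ if $a=1$, and $\alpha\|\beta$ is concatenation ($\alpha$ occupying the most significant positions). $\mathrm{adp}^{\mathrm{XR}}_r(\alpha,\beta\to\gamma)=4^{-n}\#\{(x,y)\in(\mathbb{Z}_2^n)^2: ((x+\alpha)\oplus(y+\beta))\lll r=((x\oplus y)\lll r)+\gamma\}$. Indices $0,\dots,7$ are identified with $\mathbb{Z}_2^3$ via $(p_0,p_1,p_2)\leftrightarrow4p_0+2p_1+p_2$; $e_0,\dots,e_7$ are the standard basis row vectors of $\mathbb{Q}^8$. $A_0$ is the $8\times8$ matrix $\frac14$ times the matrix with rows $(4,0,0,1,0,1,1,0)$,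 $(0,0,0,1,0,1,0,0)$, $(0,0,0,1,0,0,1,0)$, $(0,0,0,1,0,0,0,0)$, $(0,0,0,0,0,1,1,0)$, $(0,0,0,0,0,1,0,0)$, $(0,0,0,0,0,0,1,0)$, $(0,\dots,0)$ (rows and columns indexed $0,\dots,7$), and $(A_k)_{i,j}=(A_0)_{i\oplus k,j\oplus k}$ for $k\in\mathbb{Z}_2^3$. For $\alpha,\beta,\gamma\in\mathbb{Z}_2^m$ let $\omega_i=4\alpha_i+2\beta_i+\gamma_i$. Let $L_0=(1,0,1,0,1,0,1,0)$, $L_1=(0,1,0,1,0,1,0,1)$, $L_{0,0}=(1,1,0,0,0,0,0,0)$, $L_{0,1}=(0,0,1,1,0,0,0,0)$, $L_{1,0}=(0,0,0,0,1,1,0,0)$, $L_{1,1}=(0,0,0,0,0,0,1,1)$, and define $\mathrm{cadp}_c(\alpha,\beta,\gamma)=L_cA_{\omega_0}\cdots A_{\omega_{m-1}}e_0^T$ and $\mathrm{padp}_{a,b}(\alpha,\beta,\gamma)=L_{a,b}A_{\omega_0}\cdots A_{\omega_{m-1}}e_0^T$. *)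

(* Defs.v *)
From mathcomp Require Import all_boot all_order all_algebra.
Set Implicit Arguments. Unset Strict Implicit. Unset Printing Implicit Defensive.
Import GRing.Theory Num.Theory.

(* Bit vectors in Z_2^m: x = (x_0, ..., x_{m-1}), x_0 is the MOST significant bit. *)
Definition bv (m : nat) := m.-tuple bool.

Definition bit {m} (x : bv m) (i : nat) : bool := nth false x i.

Definition bv_to_nat {m} (x : bv m) : nat := \sum_(i < m) (bit x i) * 2 ^ (m.-1 - i).

Definition bv_of_nat (m v : nat) : bv m := [tuple odd (v %/ 2 ^ (m.-1 - i)) | i < m].

Definition bv_add {n} (x y : bv n) : bv n := bv_of_nat n (bv_to_nat x + bv_to_nat y).

Definition bv_xor {n} (x y : bv n) : bv n := [tuple bit x i (+) bit y i | i < n].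

Definition bv_rotl {n} (x : bv n) (r : nat) : bv n := [tuple bit x ((i + r) %% n) | i < n].

Definition bv_compl {n} (x : bv n) : bv n := [tuple ~~ bit x i | i < n].

Definition bv_cpow {n} (x : bv n) (a : bool) : bv n := if a then bv_compl x else x.

(* a || b (a in the most significant positions), as a vector of length n;
   used with n = k + l *)
Definition bv_cat (n : nat) {k l} (a : bv k) (b : bv l) : bv n :=
  [tuple nth false (val a ++ val b) i | i < n].

Definition adpXR (n r : nat) (al be ga : bv n) : rat :=
  (#|[set xy : bv n * bv n |
      bv_rotl (bv_xor (bv_add xy.1 al) (bv_add xy.2 be)) r
      == bv_add (bv_rotl (bv_xor xy.1 xy.2) r) ga]|)%:R / (4 ^ n)%:R.

Local Open Scope ring_scope.

Definition A0_rows : seq (seq nat) :=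
  [:: [:: 4; 0; 0; 1; 0; 1; 1; 0];
      [:: 0; 0; 0; 1; 0; 1; 0; 0];
      [:: 0; 0; 0; 1; 0; 0; 1; 0];
      [:: 0; 0; 0; 1; 0; 0; 0; 0];
      [:: 0; 0; 0; 0; 0; 1; 1; 0];
      [:: 0; 0; 0; 0; 0; 1; 0; 0];
      [:: 0; 0; 0; 0; 0; 0; 1; 0];
      [:: 0; 0; 0; 0; 0; 0; 0; 0]].

Definition A0 : 'M[rat]_8 :=
  \matrix_(i < 8, j < 8) ((nth 0%N (nth [::] A0_rows i) j)%:R / 4%:R).

(* xor of indices in 0..7, viewed as elements of Z_2^3 via 4p0+2p1+p2 *)
Definition xor3 (i k : 'I_8) : 'I_8 :=
  inord (4 * (odd (i %/ 4) (+) odd (k %/ 4)) + 2 * (odd (i %/ 2) (+) odd (k %/ 2))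
         + (odd i (+) odd k))%N.

Definition Amat (k : 'I_8) : 'M[rat]_8 := \matrix_(i, j) A0 (xor3 i k) (xor3 j k).

Definition omega {m} (al be ga : bv m) (i : nat) : 'I_8 :=
  inord (4 * bit al i + 2 * bit be i + bit ga i)%N.

Definition Aprod {m} (al be ga : bv m) : 'M[rat]_8 :=
  \prod_(i < m) Amat (omega al be ga i).

Definition rowv (s : seq nat) : 'rV[rat]_8 := \row_(j < 8) (nth 0%N s j)%:R.

Definition e0T : 'cV[rat]_8 := \col_(j < 8) (if j == 0 :> nat then 1 else 0).

Definition Lc (c : bool) : 'rV[rat]_8 :=
  if c then rowv [:: 0; 1; 0; 1; 0; 1; 0; 1]%N else rowv [:: 1; 0; 1; 0; 1; 0; 1; 0]%N.

Definition Lab (a b : bool) : 'rV[rat]_8 :=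
  match a, b with
  | false, false => rowv [:: 1; 1; 0; 0; 0; 0; 0; 0]%N
  | false, true  => rowv [:: 0; 0; 1; 1; 0; 0; 0; 0]%N
  | true,  false => rowv [:: 0; 0; 0; 0; 1; 1; 0; 0]%N
  | true,  true  => rowv [:: 0; 0; 0; 0; 0; 0; 1; 1]%N
  end.

Definition cadp (c : bool) {m} (al be ga : bv m) : rat :=
  (Lc c *m Aprod al be ga *m e0T) 0 0.

Definition padp (a b : bool) {m} (al be ga : bv m) : rat :=
  (Lab a b *m Aprod al be ga *m e0T) 0 0.

Arguments adpXR : clear implicits.

(* Main.v *)
Require Import Defs.
From mathcomp Require Import all_boot all_order all_algebra.
From mathcomp Require Import zify.
Import GRing.Theory Num.Theory.
Local Open Scope ring_scope.

Definition sb1 (s : nat) : bool := odd (s %/ 4).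
Definition sb2 (s : nat) : bool := odd (s %/ 2).
Definition sb3 (s : nat) : bool := odd s.
Definition mkstn (c1 c2 c3 : bool) : nat := (4 * c1 + 2 * c2 + c3)%N.
Definition mkst (c1 c2 c3 : bool) : 'I_8 := inord (mkstn c1 c2 c3).
Definition maj (x a c : bool) : bool := (x && a) || (c && (x (+) a)).
Definition xor3n (i k : nat) : nat :=
  mkstn (odd (i %/ 4) (+) odd (k %/ 4)) (odd (i %/ 2) (+) odd (k %/ 2)) (odd i (+) odd k).

Lemma mkstn_lt c1 c2 c3 : (mkstn c1 c2 c3 < 8)%N.
Proof. by case: c1; case: c2; case: c3. Qed.
Lemma mkstE c1 c2 c3 : nat_of_ord (mkst c1 c2 c3) = mkstn c1 c2 c3.
Proof. by rewrite /mkst inordK // mkstn_lt. Qed.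
Lemma xor3E (i k : 'I_8) : nat_of_ord (xor3 i k) = xor3n i k.
Proof. by rewrite /xor3 inordK // -/(mkstn _ _ _) mkstn_lt. Qed.

Definition stepc (a b g x y : bool) (u t : nat) : bool :=
  ((x (+) a (+) sb1 u) (+) (y (+) b (+) sb2 u) == ((x (+) y) (+) g (+) sb3 u)) &&
  (mkstn (maj x a (sb1 u)) (maj y b (sb2 u)) (maj (x (+) y) g (sb3 u)) == t).

Definition stepn a b g u t : nat :=
  (stepc a b g true true u t + stepc a b g true false u t +
  (stepc a b g false true u t + stepc a b g false false u t))%N.

Definition bools := [:: true; false].
Lemma allbP (P : bool -> bool) : all P bools -> forall t, P t.
Proof. by move=> /allP H [|]; apply: H. Qed.
Lemma all8P (P : nat -> bool) : all P (iota 0 8) -> forall t, (t < 8)%N -> P t.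
Proof. by move=> /allP H t ht; apply: H; rewrite mem_iota. Qed.

Lemma step_check_b : all (fun a => all (fun b => all (fun g => all (fun t => all (fun u =>
  nth 0%N (nth [::] A0_rows (xor3n t (mkstn a b g))) (xor3n u (mkstn a b g)) == stepn a b g u t)
  (iota 0 8)) (iota 0 8)) bools) bools) bools.
Proof. by vm_compute. Qed.

Lemma Amat_step a b g (t u : 'I_8) : Amat (mkst a b g) t u * 4%:R = (stepn a b g u t)%:R.
Proof.
rewrite /Amat /A0 !mxE !xor3E mkstE divfK; last by [].
have := step_check_b; move/allbP/(_ a)/allbP/(_ b)/allbP/(_ g).
by move/all8P/(_ _ (ltn_ord t))/all8P/(_ _ (ltn_ord u))/eqP ->.
Qed.

Lemma sb_mkstn c1 c2 c3 : [/\ sb1 (mkstn c1 c2 c3) = c1, sb2 (mkstn c1 c2 c3) = c2 & sb3 (mkstn c1 c2 c3) = c3].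
Proof. by case: c1; case: c2; case: c3. Qed.

Lemma mkstn_sb (s : 'I_8) : mkstn (sb1 s) (sb2 s) (sb3 s) = s.
Proof. by case: s => [[|[|[|[|[|[|[|[|]]]]]]]] //]. Qed.

Definition omegas (al be ga : seq bool) (i : nat) : 'I_8 :=
  inord (4 * nth false al i + 2 * nth false be i + nth false ga i).

Fixpoint addc (x a : seq bool) (c : bool) : seq bool * bool :=
  match x, a with
  | x0 :: xs, a0 :: as_ => let p := addc xs as_ c in (x0 (+) a0 (+) p.2 :: p.1, maj x0 a0 p.2)
  | _, _ => ([::], c) end.

Definition xors (s t : seq bool) := [seq p.1 (+) p.2 | p <- zip s t].

Definition cond (al be ga x y : seq bool) (s t : nat) : bool :=
  let p1 := addc x al (sb1 s) in let p2 := addc y be (sb2 s) in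
  let p3 := addc (xors x y) ga (sb3 s) in
  (xors p1.1 p2.1 == p3.1) && (mkstn p1.2 p2.2 p3.2 == t).

Fixpoint allseq m : seq (seq bool) :=
  if m is m'.+1 then [seq true :: s | s <- allseq m'] ++ [seq false :: s | s <- allseq m']
  else [:: [::]].

Lemma sum_allseqS (F : seq bool -> rat) m :
  \sum_(s <- allseq m.+1) F s = \sum_(b : bool) \sum_(s <- allseq m) F (b :: s).
Proof. by rewrite /= big_cat !big_map big_bool. Qed.

Definition cnt al be ga m s t : rat :=
  \sum_(x <- allseq m) \sum_(y <- allseq m) (cond al be ga x y s t)%:R.

Lemma sum_pick (c : nat) (F : 'I_8 -> rat) : (c < 8)%N ->
  \sum_(u < 8) ((c == u :> nat)%:R * F u) = F (inord c).
Proof.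
move=> hc; rewrite (bigD1 (inord c)) //= inordK // eqxx mul1r big1 ?addr0 //.
move=> u hu; case: eqP => [hcu|]; last by rewrite mul0r.
by case/eqP: hu; apply: val_inj; rewrite /= inordK.
Qed.

Lemma cond_cons a al b be g ga x0 xs y0 ys s t :
  (cond (a :: al) (b :: be) (g :: ga) (x0 :: xs) (y0 :: ys) s t)%:R =
  \sum_(u < 8) (cond al be ga xs ys s u)%:R * (stepc a b g x0 y0 u t)%:R :> rat.
Proof.
rewrite /cond /=.
set p1 := addc xs al _; set p2 := addc ys be _; set p3 := addc (xors xs ys) ga _.
under eq_bigr do rewrite andbC -mulnb natrM -mulrA.
rewrite sum_pick ?mkstn_lt // inordK ?mkstn_lt // /stepc.
case: (sb_mkstn p1.2 p2.2 p3.2) => -> -> ->.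
rewrite [xors (_ :: _) _]/xors /= eqseq_cons -/(xors _ _).
by case: (_ == _); case: (_ == _); case: (_ == _); rewrite /= ?mul1r ?mulr1 ?mul0r ?mulr0.
Qed.

Lemma stepnE a b g u t : (stepn a b g u t)%:R =
  \sum_(x0 : bool) \sum_(y0 : bool) (stepc a b g x0 y0 u t)%:R :> rat.
Proof. by rewrite !big_bool /stepn /= !natrD. Qed.

Lemma rearr (X Y : seq (seq bool)) (S : 'I_8 -> bool -> bool -> rat)
  (C : 'I_8 -> seq bool -> seq bool -> rat) :
  \sum_u (\sum_x0 \sum_y0 S u x0 y0) * (\sum_(xs <- X) \sum_(ys <- Y) C u xs ys) =
  \sum_x0 \sum_(xs <- X) \sum_y0 \sum_(ys <- Y) \sum_u C u xs ys * S u x0 y0.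
Proof.
transitivity (\sum_u \sum_x0 \sum_y0 \sum_(xs <- X) \sum_(ys <- Y) C u xs ys * S u x0 y0).
  apply: eq_bigr => u _; rewrite big_distrl; apply: eq_bigr => x0 _.
  rewrite big_distrl; apply: eq_bigr => y0 _; rewrite big_distrr; apply: eq_bigr => xs _.
  by rewrite big_distrr; apply: eq_bigr => ys _; rewrite mulrC.
rewrite exchange_big; apply: eq_bigr => x0 _.
rewrite exchange_big; under eq_bigr do rewrite exchange_big.
rewrite exchange_big; apply: eq_bigr => xs _; apply: eq_bigr => y0 _.
by rewrite exchange_big.
Qed.

Lemma sem m : forall al be ga : seq bool, size al = m -> size be = m -> size ga = m ->
  forall s t : 'I_8,
  (\prod_(i < m) Amat (omegas al be ga i)) t s * (4 ^ m)%:R = cnt al be ga m s t.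
Proof.
elim: m => [|m IH] al be ga.
  case: al => // ; case: be => //; case: ga => // _ _ _ s t.
  rewrite big_ord0 /cnt /= !big_seq1 /cond /= mkstn_sb expn0 mulr1 mxE.
  by rewrite eq_sym.
case: al => // a al; case: be => // b be; case: ga => // g ga [sa] [sb] [sg] s t.
rewrite big_ord_recl.
have -> : \prod_(i < m) Amat (omegas (a :: al) (b :: be) (g :: ga) (lift ord0 i)) =
          \prod_(i < m) Amat (omegas al be ga i) by apply: eq_bigr.
have -> : omegas (a :: al) (b :: be) (g :: ga) ord0 = mkst a b g by [].
rewrite -mulmxE mxE mulr_suml.
under eq_bigr => u _ do rewrite expnS natrM mulrACA Amat_step IH //.
under eq_bigr do rewrite stepnE.
rewrite (rearr _ _ (fun u x0 y0 => (stepc a b g x0 y0 u t)%:R) (fun u xs ys => (cond al be ga xs ys s u)%:R)).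
rewrite /cnt sum_allseqS; apply: eq_bigr => x0 _; apply: eq_bigr => xs _.
rewrite sum_allseqS; apply: eq_bigr => y0 _; apply: eq_bigr => ys _.
by rewrite cond_cons.
Qed.

Lemma xor3n_check : all (fun t => all (fun k => all (fun i =>
   (xor3n (xor3n t k) k == t) && (xor3n t (xor3n i k) == xor3n (xor3n t k) i))
   (iota 0 8)) (iota 0 8)) (iota 0 8).
Proof. by vm_compute. Qed.

Lemma xor3K (t k : 'I_8) : xor3 (xor3 t k) k = t.
Proof.
apply: val_inj; rewrite /= !xor3E.
have := xor3n_check; move/all8P/(_ _ (ltn_ord t))/all8P/(_ _ (ltn_ord k))/all8P/(_ _ (ltn_ord k)).
by case/andP => /eqP.
Qed.

Lemma xor3A (t i k : 'I_8) : xor3 t (xor3 i k) = xor3 (xor3 t k) i.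
Proof.
apply: val_inj; rewrite /= !xor3E.
have := xor3n_check; move/all8P/(_ _ (ltn_ord t))/all8P/(_ _ (ltn_ord k))/all8P/(_ _ (ltn_ord i)).
by case/andP => _ /eqP.
Qed.

Lemma xor3_inj k : injective (xor3^~ k).
Proof. by move=> x y /= h; rewrite -(xor3K x k) h xor3K. Qed.

Lemma Amat_xor (w k t u : 'I_8) : Amat (xor3 w k) t u = Amat w (xor3 t k) (xor3 u k).
Proof. by rewrite /Amat !mxE !xor3A. Qed.

Lemma perm_prod m : forall (w : nat -> 'I_8) (k t s : 'I_8),
  (\prod_(i < m) Amat (xor3 (w i) k)) t s = (\prod_(i < m) Amat (w i)) (xor3 t k) (xor3 s k).
Proof.
elim: m => [|m IH] w k t s.
  rewrite !big_ord0 !mxE; congr ((_ : bool)%:R).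
  by apply/eqP/eqP => [->|/xor3_inj].
rewrite !big_ord_recl -!mulmxE !mxE.
rewrite (reindex_inj (@xor3_inj k)) /=.
apply: eq_bigr => u _.
rewrite Amat_xor xor3K; congr (_ * _).
by rewrite mulmxE (IH (fun i => w (bump 0 i))) xor3K.
Qed.

Definition cp (a : bool) (s : seq bool) := if a then map negb s else s.

Lemma val_cpow m (x : bv m) a : val (bv_cpow x a) = cp a (val x).
Proof.
case: a => //.
have -> : val (bv_cpow x true) = val (bv_compl x) by [].
apply: (@eq_from_nth _ false); first by rewrite size_map !size_tuple.
move=> i; rewrite size_tuple => hi.
by rewrite -[i]/(nat_of_ord (Ordinal hi)) nth_mktuple (nth_map false) ?size_tuple.
Qed.

Lemma nth_cp a s i : (i < size s)%N -> nth false (cp a s) i = nth false s i (+) a.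
Proof. by case: a => /= hi; rewrite ?(nth_map false) ?addbT ?addbF. Qed.

Lemma mkst_xor x y z a b g : mkst (x (+) a) (y (+) b) (z (+) g) = xor3 (mkst x y z) (mkst a b g).
Proof.
apply: val_inj; rewrite /= xor3E !mkstE.
by case: x; case: y; case: z; case: a; case: b; case: g.
Qed.

Lemma omegasE al be ga i : omegas al be ga i = mkst (nth false al i) (nth false be i) (nth false ga i).
Proof. by []. Qed.

Lemma xor30 (k : 'I_8) : xor3 ord0 k = k.
Proof. by apply: val_inj; rewrite /= xor3E /xor3n /= -[RHS]mkstn_sb. Qed.

Lemma gen m (al be ga : bv m) a b g (L : 'rV[rat]_8) :
  (forall t, L 0 (xor3 t (mkst a b g)) = L 0 t) ->
  (L *m Aprod (bv_cpow al a) (bv_cpow be b) (bv_cpow ga g) *m e0T) 0 0 * (4 ^ m)%:R =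
  \sum_(t < 8) L 0 t * cnt al be ga m (mkst a b g) t.
Proof.
move=> HL.
have HP : Aprod (bv_cpow al a) (bv_cpow be b) (bv_cpow ga g) =
          \prod_(i < m) Amat (xor3 (omegas al be ga i) (mkst a b g)).
  apply: eq_bigr => i _.
  rewrite /omega -/(omegas _ _ _ _) !val_cpow omegasE !nth_cp ?size_tuple // mkst_xor.
  by [].
rewrite HP; set P := \prod_(i < m) _.
rewrite mxE (bigD1 (ord0 : 'I_8)) //= big1 => [|j hj]; last first.
  have -> : e0T j 0 = 0.
    rewrite /e0T mxE; case: (j =P 0 :> nat) => // hj0.
    by case/eqP: hj; apply: val_inj.
  by rewrite mulr0.
have -> : e0T ord0 0 = 1 by rewrite /e0T mxE.
rewrite mulr1 addr0 mxE mulr_suml.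
rewrite (reindex_inj (@xor3_inj (mkst a b g))) /=.
apply: eq_bigr => t _.
rewrite /P perm_prod xor3K xor30 HL -mulrA sem ?size_tuple //.
Qed.

Local Close Scope ring_scope.

Fixpoint V (s : seq bool) : nat := if s is b :: t then b * 2 ^ size t + V t else 0.

Lemma sum_V s : \sum_(i < size s) nth false s i * 2 ^ ((size s).-1 - i) = V s.
Proof.
elim: s => [|b t IH]; first by rewrite big_ord0.
rewrite big_ord_recl /= subn0 -IH; congr (_ + _); apply: eq_bigr => i _.
by rewrite /bump /=; congr (_ * 2 ^ _); rewrite add1n subnS -!subn1 subnAC.
Qed.

Lemma bv_to_natE m (x : bv m) : bv_to_nat x = V x.
Proof. rewrite -sum_V /bv_to_nat; move: (size_tuple x) => /= h; move: x h. by rewrite /bit => x ->. Qed.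

Lemma V_lt s : V s < 2 ^ size s.
Proof. elim: s => [|b t IH] //=; rewrite expnS; case: b => /=; lia. Qed.

Lemma addc_size x a c : size x = size a -> size (addc x a c).1 = size x.
Proof.
elim: x a => [|x0 xs IH] [|a0 as_] h //=.
by rewrite IH //; case: h.
Qed.

Lemma addcV x a c : size x = size a ->
  V (addc x a c).1 + (addc x a c).2 * 2 ^ size x = V x + V a + c.
Proof.
elim: x a => [|x0 xs IH] [|a0 as_] h //=.
  by rewrite expn0 muln1.
case: h => h. have E := IH _ h. rewrite addc_size // in E *.
move: (addc xs as_ c) E => [p1 p2] /= E.
rewrite -h expnS /maj; move: E; case: x0; case: a0; case: p2 => /=; lia.
Qed.

Fixpoint bon m v : seq bool := if m is m'.+1 then odd (v %/ 2 ^ m') :: bon m' v else [::].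

Lemma size_bon m v : size (bon m v) = m.
Proof. by elim: m => //= m ->. Qed.

Lemma bonE m v : val (bv_of_nat m v) = bon m v.
Proof.
apply: (@eq_from_nth _ false); first by rewrite size_tuple size_bon.
move=> i; rewrite size_tuple => hi.
rewrite -[i]/(nat_of_ord (Ordinal hi)) nth_mktuple /=.
elim: m i hi => [|m IH] [|i] //= hi.
  by rewrite subn0.
by rewrite -IH //; congr (odd (_ %/ 2 ^ _)); rewrite subnS -!subn1 subnAC.
Qed.

Lemma bon_V u q : bon (size u) (V u + q * 2 ^ size u) = u.
Proof.
elim: u q => [|b t IH] q //=.
have -> : b * 2 ^ size t + V t + q * 2 ^ (size t).+1 = V t + (b + 2 * q) * 2 ^ size t.
  rewrite expnS; lia.
rewrite IH; congr (_ :: _).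
rewrite divnDr ?dvdn_mull // divn_small ?V_lt // mulnK ?expn_gt0 //.
by rewrite add0n oddD oddM; case: b.
Qed.

Lemma bon_V' m s q : size s = m -> bon m (V s + q * 2 ^ m) = s.
Proof. by move=> <-; apply: bon_V. Qed.

Lemma val_add m (x y : bv m) : val (bv_add x y) = (addc x y false).1.
Proof.
rewrite /bv_add bonE !bv_to_natE.
have hs : size x = size y by rewrite !size_tuple.
have E := @addcV x y false hs; have S := @addc_size x y false hs.
rewrite size_tuple /= addn0 in E; rewrite size_tuple in S.
by rewrite -E bon_V'.
Qed.

Lemma size_xors u v : size u = size v -> size (xors u v) = size u.
Proof. by move=> h; rewrite /xors size_map size_zip h minnn. Qed.

Lemma val_xor m (x y : bv m) : val (bv_xor x y) = xors x y.
Proof.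
apply: (@eq_from_nth _ false); first by rewrite size_xors !size_tuple.
move=> i; rewrite size_tuple => hi.
rewrite -[i]/(nat_of_ord (Ordinal hi)) nth_mktuple /xors (nth_map (false, false)) /=.
  by rewrite nth_zip ?size_tuple.
by rewrite size_zip !size_tuple minnn.
Qed.

Lemma val_rotl m (x : bv m) r : (r <= m)%N -> val (bv_rotl x r) = rot r x.
Proof.
move=> hr; apply: (@eq_from_nth _ false); first by rewrite size_rot !size_tuple.
move=> i; rewrite size_tuple => hi.
rewrite -[i]/(nat_of_ord (Ordinal hi)) nth_mktuple /= /bit /rot nth_cat size_drop size_tuple.
case: ltnP => h.
  by rewrite nth_drop modn_small 1?addnC //; lia.
rewrite nth_take; last by lia.
have -> : (i + r = (i - (m - r)) + m)%N by lia.
by rewrite modnDr modn_small //; lia.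
Qed.

Lemma val_cat n k l (a : bv k) (b : bv l) : (k + l = n)%N -> val (bv_cat n a b) = val a ++ val b.
Proof.
move=> h; apply: (@eq_from_nth _ false); first by rewrite size_cat !size_tuple.
move=> i; rewrite size_tuple => hi.
by rewrite -[i]/(nat_of_ord (Ordinal hi)) nth_mktuple.
Qed.

Lemma mem_map_cons (c b : bool) s A : (b :: s \in [seq c :: t | t <- A]) = (b == c) && (s \in A).
Proof.
apply/mapP/andP => [[t ht [-> ->]]|[/eqP -> hs]]; first by rewrite eqxx.
by exists s.
Qed.

Lemma mem_allseq m s : (s \in allseq m) = (size s == m).
Proof.
elim: m s => [|m IH] [|b s] //=; rewrite ?inE //= mem_cat.
  by apply/negbTE/negP; case/orP => /mapP [? _ //].
by rewrite !mem_map_cons IH eqSS; case: b; case: (size s == m).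
Qed.

Lemma allseq_uniq m : uniq (allseq m).
Proof.
elim: m => [|m IH] //=; rewrite cat_uniq !map_inj_uniq // ?IH /=; last 2 first.
- by move=> x y [].
- by move=> x y [].
rewrite andbT; apply/hasPn => s /mapP [t _ ->]; by rewrite mem_map_cons.
Qed.

Local Open Scope ring_scope.

Lemma sum_tuple_allseq (F : seq bool -> rat) n :
  \sum_(x : bv n) F (val x) = \sum_(s <- allseq n) F s.
Proof.
rewrite -(big_map val xpredT F); apply: perm_big.
apply: uniq_perm; first by rewrite map_inj_uniq ?index_enum_uniq //; exact: val_inj.
  exact: allseq_uniq.
move=> s; rewrite mem_allseq; apply/mapP/idP => [[x _ ->]|/eqP hs].
  by rewrite size_tuple.
by exists (Tuple (introT eqP hs)); rewrite ?mem_index_enum.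
Qed.

Lemma sum_allseq_split (F : seq bool -> rat) m m1 m2 : m = (m1 + m2)%N ->
  \sum_(s <- allseq m) F s = \sum_(u <- allseq m1) \sum_(v <- allseq m2) F (u ++ v).
Proof.
move=> ->; elim: m1 F => [|m1 IH] F; first by rewrite big_seq1.
rewrite addSn sum_allseqS (sum_allseqS (fun u => \sum_(v <- allseq m2) F (u ++ v))).
by apply: eq_bigr => b _; rewrite IH.
Qed.

Lemma addc_cat u1 u2 v1 v2 c : size u1 = size v1 ->
  addc (u1 ++ u2) (v1 ++ v2) c =
  ((addc u1 v1 (addc u2 v2 c).2).1 ++ (addc u2 v2 c).1, (addc u1 v1 (addc u2 v2 c).2).2).
Proof.
elim: u1 v1 => [|x u1 IH] [|y v1] //= h.
  by case: (addc u2 v2 c).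
by case: h => h; rewrite IH.
Qed.

Lemma xors_cat u1 u2 v1 v2 : size u1 = size v1 -> xors (u1 ++ u2) (v1 ++ v2) = xors u1 v1 ++ xors u2 v2.
Proof. by move=> h; rewrite /xors zip_cat // map_cat. Qed.

Local Open Scope ring_scope.

Lemma Lab_entry a b (t : 'I_8) : Lab a b 0 t = ((sb1 t == a) && (sb2 t == b))%:R.
Proof.
by case: a; case: b; rewrite /Lab /rowv mxE; case: t => [[|[|[|[|[|[|[|[|]]]]]]]] //].
Qed.

Lemma Lc_entry c (t : 'I_8) : Lc c 0 t = (sb3 t == c)%:R.
Proof.
by case: c; rewrite /Lc /rowv mxE; case: t => [[|[|[|[|[|[|[|[|]]]]]]]] //].
Qed.

Lemma sb1_mkstn c1 c2 c3 : sb1 (mkstn c1 c2 c3) = c1.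
Proof. by case: (sb_mkstn c1 c2 c3). Qed.
Lemma sb2_mkstn c1 c2 c3 : sb2 (mkstn c1 c2 c3) = c2.
Proof. by case: (sb_mkstn c1 c2 c3). Qed.
Lemma sb3_mkstn c1 c2 c3 : sb3 (mkstn c1 c2 c3) = c3.
Proof. by case: (sb_mkstn c1 c2 c3). Qed.

Lemma sbxor1 (t : 'I_8) c : sb1 (xor3 t (mkst false false c)) = sb1 t.
Proof. by rewrite xor3E mkstE /xor3n; rewrite sb1_mkstn; case: c; rewrite addbF. Qed.
Lemma sbxor2 (t : 'I_8) c : sb2 (xor3 t (mkst false false c)) = sb2 t.
Proof. by rewrite xor3E mkstE /xor3n; rewrite sb2_mkstn; case: c; rewrite addbF. Qed.
Lemma sbxor3 (t : 'I_8) a b : sb3 (xor3 t (mkst a b false)) = sb3 t.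
Proof. by rewrite xor3E mkstE /xor3n; rewrite sb3_mkstn; case: a; case: b; rewrite addbF. Qed.

Lemma padpE a b c m (al be ga : bv m) :
  padp a b al be (bv_cpow ga c) * (4 ^ m)%:R =
  \sum_(t < 8) Lab a b 0 t * cnt al be ga m (mkst false false c) t.
Proof.
transitivity ((Lab a b *m Aprod (bv_cpow al false) (bv_cpow be false) (bv_cpow ga c) *m e0T) 0 0 * (4 ^ m)%:R); first by [].
apply: gen.
by move=> t; rewrite !Lab_entry sbxor1 sbxor2.
Qed.

Lemma cadpE a b c m (al be ga : bv m) :
  cadp c (bv_cpow al a) (bv_cpow be b) ga * (4 ^ m)%:R =
  \sum_(t < 8) Lc c 0 t * cnt al be ga m (mkst a b false) t.
Proof.
transitivity ((Lc c *m Aprod (bv_cpow al a) (bv_cpow be b) (bv_cpow ga false) *m e0T) 0 0 * (4 ^ m)%:R); first by [].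
apply: gen.
by move=> t; rewrite !Lc_entry sbxor3.
Qed.

Definition Lo (al be ga : seq bool) (a b c : bool) (xl yl : seq bool) : rat :=
  let pa := addc xl al false in let pb := addc yl be false in
  ((xors pa.1 pb.1 == (addc (xors xl yl) ga c).1) && ((pa.2 == a) && (pb.2 == b)))%:R.

Definition Hi (al be ga : seq bool) (a b c : bool) (xh yh : seq bool) : rat :=
  let pc := addc (xors xh yh) ga false in
  ((xors (addc xh al a).1 (addc yh be b).1 == pc.1) && (pc.2 == c))%:R.

Lemma sum_pick2 (E : bool) (c : nat) (F : 'I_8 -> rat) : (c < 8)%N ->
  \sum_(t < 8) F t * (E && (c == t :> nat))%:R = E%:R * F (inord c).
Proof.
move=> hc.
have H : forall t : 'I_8, F t * (E && (c == t :> nat))%:R = E%:R * ((c == t :> nat)%:R * F t).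
  by move=> t; case: E; case: (c == t :> nat); rewrite /= ?mul0r ?mulr0 ?mul1r ?mulr1.
under eq_bigr do rewrite H.
by rewrite -mulr_sumr sum_pick.
Qed.

Lemma sum_in (F : 'I_8 -> rat) (G : 'I_8 -> seq bool -> seq bool -> rat) X :
  \sum_(t < 8) F t * (\sum_(x <- X) \sum_(y <- X) G t x y) =
  \sum_(x <- X) \sum_(y <- X) \sum_(t < 8) F t * G t x y.
Proof.
under eq_bigr do rewrite big_distrr.
rewrite exchange_big; apply: eq_bigr => x _.
under eq_bigr do rewrite big_distrr.
by rewrite exchange_big.
Qed.

Lemma LoE a b c m (al be ga : seq bool) :
  \sum_(t < 8) Lab a b 0 t * cnt al be ga m (mkst false false c) t =
  \sum_(xl <- allseq m) \sum_(yl <- allseq m) Lo al be ga a b c xl yl.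
Proof.
rewrite /cnt sum_in; apply: eq_bigr => x _; apply: eq_bigr => y _.
rewrite /cond mkstE sb1_mkstn sb2_mkstn sb3_mkstn sum_pick2 ?mkstn_lt //.
by rewrite Lab_entry inordK ?mkstn_lt // sb1_mkstn sb2_mkstn -natrM mulnb.
Qed.

Lemma HiE a b c m (al be ga : seq bool) :
  \sum_(t < 8) Lc c 0 t * cnt al be ga m (mkst a b false) t =
  \sum_(xh <- allseq m) \sum_(yh <- allseq m) Hi al be ga a b c xh yh.
Proof.
rewrite /cnt sum_in; apply: eq_bigr => x _; apply: eq_bigr => y _.
rewrite /cond mkstE sb1_mkstn sb2_mkstn sb3_mkstn sum_pick2 ?mkstn_lt //.
by rewrite Lc_entry inordK ?mkstn_lt // sb3_mkstn -natrM mulnb.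
Qed.

Lemma prod4 (Xh Xl : seq (seq bool)) (L H : seq bool -> seq bool -> rat) :
  (\sum_(xl <- Xl) \sum_(yl <- Xl) L xl yl) * (\sum_(xh <- Xh) \sum_(yh <- Xh) H xh yh) =
  \sum_(xh <- Xh) \sum_(xl <- Xl) \sum_(yh <- Xh) \sum_(yl <- Xl) L xl yl * H xh yh.
Proof.
rewrite mulrC big_distrl; apply: eq_bigr => xh _.
rewrite big_distrl /=.
transitivity (\sum_(yh <- Xh) \sum_(xl <- Xl) \sum_(yl <- Xl) L xl yl * H xh yh).
  apply: eq_bigr => yh _; rewrite mulrC big_distrl; apply: eq_bigr => xl _.
  by rewrite big_distrl.
by rewrite exchange_big.
Qed.

Lemma ex4 (X Y Z W : seq (seq bool)) (F : bool -> seq bool -> seq bool -> seq bool -> seq bool -> rat) :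
  \sum_(i : bool) \sum_(x <- X) \sum_(y <- Y) \sum_(z <- Z) \sum_(w <- W) F i x y z w =
  \sum_(x <- X) \sum_(y <- Y) \sum_(z <- Z) \sum_(w <- W) \sum_(i : bool) F i x y z w.
Proof.
rewrite exchange_big; apply: eq_bigr => x _; rewrite exchange_big; apply: eq_bigr => y _.
rewrite exchange_big; apply: eq_bigr => z _; exact: exchange_big.
Qed.

Lemma rot_cat_size r (u1 u2 : seq bool) : size u1 = r -> rot r (u1 ++ u2) = u2 ++ u1.
Proof. by move=> <-; apply: rot_size_cat. Qed.

Definition Plhs (r : nat) (al' al be' be ga ga' x y : seq bool) : bool :=
  rot r (xors (addc x (al' ++ al) false).1 (addc y (be' ++ be) false).1) ==
  (addc (rot r (xors x y)) (ga ++ ga') false).1.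

Lemma pointwise r k (al' al be' be ga ga' xh xl yh yl : seq bool) :
  size al' = r -> size be' = r -> size ga' = r -> size xh = r -> size yh = r ->
  size al = k -> size be = k -> size ga = k -> size xl = k -> size yl = k ->
  (Plhs r al' al be' be ga ga' (xh ++ xl) (yh ++ yl))%:R =
  \sum_(a : bool) \sum_(b : bool) \sum_(c : bool)
     Lo al be ga a b c xl yl * Hi al' be' ga' a b c xh yh.
Proof.
move=> s1 s2 s3 s4 s5 s6 s7 s8 s9 s10.
have ac1 : forall u1 u2 v1 v2 c, size u1 = size v1 ->
  (addc (u1 ++ u2) (v1 ++ v2) c).1 = (addc u1 v1 (addc u2 v2 c).2).1 ++ (addc u2 v2 c).1.
  by move=> u1 u2 v1 v2 c h; rewrite addc_cat.
rewrite /Plhs (ac1 xh xl al' al) ?s1 ?s4 // (ac1 yh yl be' be) ?s2 ?s5 //.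
rewrite xors_cat; last by rewrite !addc_size ?s1 ?s2 ?s4 ?s5.
rewrite rot_cat_size; last by rewrite size_xors !addc_size ?s1 ?s2 ?s4 ?s5.
rewrite xors_cat ?s4 ?s5 // rot_cat_size; last by rewrite size_xors ?s4 ?s5.
rewrite (ac1 (xors xl yl)); last by rewrite size_xors ?s8 ?s9 ?s10.
rewrite eqseq_cat; last by rewrite !size_xors ?addc_size ?size_xors ?s6 ?s7 ?s9 ?s10 ?s8.
rewrite !big_bool /Lo /Hi /=.
case: (addc xl al false) => pa1 pa2; case: (addc yl be false) => pb1 pb2.
case: (addc (xors xh yh) ga' false) => pc1 pc2 /=.
case: pa2; case: pb2; case: pc2; rewrite /= ?andbT ?andbF ?mul0r ?mulr0 ?add0r ?addr0 -?natrM ?mulnb //.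
Qed.

Lemma card_sum (T : finType) (P : pred T) : #|[set x | P x]| = (\sum_x (P x : nat))%N.
Proof.
rewrite -sum1_card big_mkcond; apply: eq_bigr => x _; rewrite inE; by case: (P x).
Qed.

Lemma condE n r (al' : bv r) (al : bv (n - r)) (be' : bv r) (be : bv (n - r))
  (ga : bv (n - r)) (ga' : bv r) (x y : bv n) : (r <= n)%N ->
  (bv_rotl (bv_xor (bv_add x (bv_cat n al' al)) (bv_add y (bv_cat n be' be))) r ==
   bv_add (bv_rotl (bv_xor x y) r) (bv_cat n ga ga')) = Plhs r al' al be' be ga ga' x y.
Proof.
move=> hr; have h1 : (r + (n - r))%N = n by lia.
have h2 : (n - r + r)%N = n by lia.
rewrite -val_eqE val_rotl // val_xor !val_add !val_cat // val_rotl // val_xor.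
by [].
Qed.

Theorem theorem2 (n r : nat) (hn : (2 <= n)%N) (hr1 : (1 <= r)%N) (hr2 : (r <= n - 1)%N)
  (al be ga : bv (n - r)) (al' be' ga' : bv r) :
  adpXR n r (bv_cat n al' al) (bv_cat n be' be) (bv_cat n ga ga') =
  \sum_(a : bool) \sum_(b : bool) \sum_(c : bool)
     padp a b al be (bv_cpow ga c) * cadp c (bv_cpow al' a) (bv_cpow be' b) ga'.
Proof.
have hk : (r + (n - r))%N = n by lia.
have hr : (r <= n)%N by lia.
have h4 : (4 ^ n)%:R != 0 :> rat by rewrite pnatr_eq0 expn_eq0.
apply: (mulIf h4).
transitivity (\sum_(xh <- allseq r) \sum_(xl <- allseq (n - r)) \sum_(yh <- allseq r)
   \sum_(yl <- allseq (n - r)) ((Plhs r al' al be' be ga ga' (xh ++ xl) (yh ++ yl))%:R : rat)).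
  rewrite /adpXR divfK // card_sum natr_sum.
  transitivity (\sum_(x : bv n) \sum_(y : bv n) ((Plhs r al' al be' be ga ga' (val x) (val y))%:R : rat)).
    by rewrite pair_bigA; apply: eq_bigr => -[x y] _ /=; rewrite condE.
  rewrite (eq_bigr (fun x : bv n => \sum_(s <- allseq n) ((Plhs r al' al be' be ga ga' (val x) s)%:R : rat))); last first.
    by move=> x _; rewrite (sum_tuple_allseq (fun s => ((Plhs r al' al be' be ga ga' (val x) s)%:R : rat))).
  rewrite (sum_tuple_allseq (fun x => \sum_(s <- allseq n) ((Plhs r al' al be' be ga ga' x s)%:R : rat))).
  rewrite (sum_allseq_split _ _ _ _ (esym hk)); apply: eq_bigr => xh _; apply: eq_bigr => xl _.
  by rewrite (sum_allseq_split _ _ _ _ (esym hk)).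
rewrite mulr_suml.
have e4 : (4 ^ n)%:R = (4 ^ (n - r))%:R * (4 ^ r)%:R :> rat by rewrite -natrM -expnD addnC hk.
transitivity (\sum_(a : bool) \sum_(b : bool) \sum_(c : bool)
   \sum_(xh <- allseq r) \sum_(xl <- allseq (n - r)) \sum_(yh <- allseq r)
   \sum_(yl <- allseq (n - r)) Lo al be ga a b c xl yl * Hi al' be' ga' a b c xh yh); last first.
  apply: eq_bigr => a _; rewrite mulr_suml; apply: eq_bigr => b _; rewrite mulr_suml.
  apply: eq_bigr => c _.
  by rewrite e4 mulrACA padpE cadpE LoE HiE prod4.
transitivity (\sum_(a : bool) \sum_(b : bool)
   \sum_(xh <- allseq r) \sum_(xl <- allseq (n - r)) \sum_(yh <- allseq r)
   \sum_(yl <- allseq (n - r)) \sum_(c : bool) Lo al be ga a b c xl yl * Hi al' be' ga' a b c xh yh); last first.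
  by apply: eq_bigr => a _; apply: eq_bigr => b _; rewrite ex4.
transitivity (\sum_(a : bool)
   \sum_(xh <- allseq r) \sum_(xl <- allseq (n - r)) \sum_(yh <- allseq r)
   \sum_(yl <- allseq (n - r)) \sum_(b : bool) \sum_(c : bool) Lo al be ga a b c xl yl * Hi al' be' ga' a b c xh yh); last first.
  by apply: eq_bigr => a _; rewrite ex4.
rewrite ex4.
apply: eq_big_seq => xh; rewrite mem_allseq => /eqP s4.
apply: eq_big_seq => xl; rewrite mem_allseq => /eqP s9.
apply: eq_big_seq => yh; rewrite mem_allseq => /eqP s5.
apply: eq_big_seq => yl; rewrite mem_allseq => /eqP s10.
by rewrite (@pointwise r (n - r)) ?size_tuple.
Qed.
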